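(* Let $\mathbf{T}$ and $\mathbf{T}'$ be distributive lattices and let $f:\mathbf{T}\to\mathbf{T}'$ be a morphism of distributive lattices. Let $\operatorname{Spec}(f):\operatorname{Spec}\mathbf{T}'\to\operatorname{Spec}\mathbf{T}$ be the dual map, $\mathfrak{q}\mapsto f^{-1}(\mathfrak{q})$. In classical mathematics, the following are equivalent. 1. $\operatorname{Spec}(f)$ is an open map. 2. There exists a map $\tilde f:\mathbf{T}'\to\mathbf{T}$ with the following properties: (a) for all $c\in\mathbf{T}$ and $b\in\mathbf{T}'$, $b\le f(c)\iff \tilde f(b)\le c$ (in particular $b\le f(\tilde f(b))$ and $\tilde f(b_1\vee b_2)=\tilde f(b_1)\vee\tilde f(b_2)$); (b) for all $a,c\in\mathbf{T}$ and $b\in\mathbf{T}'$, $f(a)\wedge b\le f(c)\iff a\wedge\tilde f(b)\le c$; (c) for all $a\in\mathbf{T}$ and $b\in\mathbf{T}'$, $\tilde f(f(a)\wedge b)=a\wedge\tilde f(b)$; (d) for all $a\in\mathbf{T}$, $\tilde f(f(a))=\tilde f(1)\wedge a$. 3. There exists a map $\tilde f:\mathbf{T}'\to\mathbf{T}$ satisfying property (b) above. 4. For every $b\in\mathbf{T}'$ the greatest lower bound $\bigwedge_{c\in\mathbf{T},\ b\le f(c)} c$ exists in $\mathbf{T}$, and, writing $\tilde f(b)$ for it, property (b) above holds.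
   Context: A prime ideal of a distributive lattice $\mathbf{T}\neq\mathbf{1}$ is an ideal whose complement is a filter; equivalently it corresponds to a lattice morphism $\mathbf{T}\to\mathbf{2}$. The spectrum $\operatorname{Spec}\mathbf{T}$ is the set of prime ideals of $\mathbf{T}$ with the topology having as basis of open sets the sets $\mathfrak{D}_{\mathbf{T}}(a)=\{\mathfrak{p}\in\operatorname{Spec}\mathbf{T}\mid a\notin\mathfrak{p}\}$ for $a\in\mathbf{T}$. A map is open if it sends open sets to open sets. *)

(* Defs.v *)
From HB Require Import structures.
From mathcomp Require Import all_boot all_order.
From mathcomp Require Import classical_sets.
Set Implicit Arguments. Unset Strict Implicit. Unset Printing Implicit Defensive.
Import Order.TTheory.
Local Open Scope order_scope.
Local Open Scope classical_set_scope.

Section Spec.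
Variables (d : Order.disp_t) (T : tbDistrLatticeType d).

Definition lattice_ideal (p : set T) : Prop :=
  [/\ p \bot,
      (forall x y : T, x <= y -> p y -> p x) &
      (forall x y : T, p x -> p y -> p (Order.join x y))].

Definition lattice_filter (F : set T) : Prop :=
  [/\ F \top,
      (forall x y : T, x <= y -> F x -> F y) &
      (forall x y : T, F x -> F y -> F (Order.meet x y))].

Definition prime_ideal (p : set T) : Prop :=
  lattice_ideal p /\ lattice_filter (~` p).

Definition Spec := {p : set T | prime_ideal p}.

Definition D_open (a : T) : set Spec := [set p | ~ (proj1_sig p) a].

(* Topology generated by the basis {D_T(a)}: U is open iff it is a union of
   basic opens, i.e. every point of U lies in some D_T(a) contained in U. *)
Definition spec_open (U : set Spec) : Prop :=
  forall p : Spec, U p -> exists a : T, D_open a p /\ D_open a `<=` U.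

End Spec.

Section SpecMap.
Variables (d d' : Order.disp_t) (T : tbDistrLatticeType d)
  (T' : tbDistrLatticeType d').

Lemma preimage_prime (f : {lmorphism T -> T'}) :
  f \bot = \bot -> f \top = \top ->
  forall q : set T', prime_ideal q -> prime_ideal (f @^-1` q).
Proof.
move=> f0 f1 q [[q0 qd qU] [q1 qu qI]]; split; split.
- by rewrite /preimage /= f0.
- by move=> x y xy; apply: qd; apply: omorph_le.
- by move=> x y qx qy; rewrite /preimage /= omorphU; apply: qU.
- by rewrite /preimage /setC /= f1.
- by move=> x y xy; apply: qu; apply: omorph_le.
- by move=> x y qx qy; rewrite /preimage /setC /= omorphI; apply: qI.
Qed.

Definition Spec_map (f : {lmorphism T -> T'}) (f0 : f \bot = \bot)
  (f1 : f \top = \top) (q : Spec T') : Spec T :=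
  exist _ (f @^-1` proj1_sig q) (preimage_prime f0 f1 (proj2_sig q)).

End SpecMap.

Definition open_map d d' (T : tbDistrLatticeType d) (T' : tbDistrLatticeType d')
  (g : Spec T' -> Spec T) : Prop :=
  forall U : set (Spec T'), spec_open U -> spec_open (g @` U).

Definition is_glb d (T : tbDistrLatticeType d) (S : set T) (m : T) : Prop :=
  (forall c, S c -> m <= c) /\ (forall m', (forall c, S c -> m' <= c) -> m' <= m).

(* Main.v *)
Require Import Defs.
From HB Require Import structures.
From mathcomp Require Import all_boot all_order.
From mathcomp Require Import classical_sets.
From mathcomp Require Import boolp.
Import Order.TTheory.
Local Open Scope order_scope.
Local Open Scope classical_set_scope.

Set Implicit Arguments. Unset Strict Implicit.

Section PIT.
Variables (d : Order.disp_t) (T : tbDistrLatticeType d).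

Lemma PIT (I F : set T) : lattice_ideal I -> lattice_filter F ->
  (forall z, I z -> F z -> False) ->
  exists p : set T, [/\ prime_ideal p, I `<=` p & forall z, F z -> ~ p z].
Proof.
move=> [I0 Id IU] [F1 Fu FI] IF.
pose P (X : set T) := [/\ (forall x y : T, x <= y -> X y -> X x),
   (forall x y : T, X x -> X y -> X (x `|` y)%O),
   (forall z, X z -> F z -> False) & (X = set0 \/ I `<=` X)].
have [M [[Md MU MF MI] Mmax]] : exists A, P A /\ forall B, A `<` B -> ~ P B.
  apply: Zorn_bigcup => C CP Ctot; split.
  - move=> x y xy [X CX Xy]; exists X => //; have [H _ _ _] := CP X CX.
    exact: H xy Xy.
  - move=> x y [X CX Xx] [Y CY Yy].
    have [XY|YX] := Ctot X Y CX CY.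
    + exists Y => //; have [_ H _ _] := CP Y CY; apply: H => //; exact: XY.
    + exists X => //; have [_ H _ _] := CP X CX; apply: H => //; exact: YX.
  - move=> z [X CX Xz] Fz; have [_ _ H _] := CP X CX; exact: H Xz Fz.
  - have [[X CX IX]|] := pselect (exists2 X, C X & I `<=` X).
      right => z Iz; exists X => //; exact: IX.
    move=> nex; left; apply/seteqP; split => // z [X CX Xz].
    have [_ _ _ [X0|IX]] := CP X CX; first by rewrite X0 in Xz.
    by exfalso; apply: nex; exists X.
have {MI} IM : I `<=` M.
  case: MI => // M0; exfalso; apply: (Mmax I); last first.
    split; [exact: Id | exact: IU | exact: IF | by right].
  rewrite M0; split => //; move=> /(_ _ I0) //.
have M0 : M \bot by apply: IM.
have MT : ~ M \top by move=> /MF; apply.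
have key x : ~ M x -> exists m f, [/\ M m, F f & f <= (m `|` x)%O].
  move=> nMx; pose Mx := [set z | exists m, M m /\ z <= (m `|` x)%O].
  have MMx : M `<` Mx.
    split; first by move=> z Mz; exists z; split => //; exact: leUl.
    by move=> /(_ x) H; apply: nMx; apply: H; exists \bot; rewrite join0x.
  have := Mmax _ MMx; apply: contra_notP => nex.
  split.
  - move=> z y zy [m [Mm ym]]; exists m; split => //; exact: le_trans ym.
  - move=> z y [m [Mm zm]] [m' [Mm' ym']]; exists (m `|` m')%O; split.
      exact: MU.
    rewrite leUx; apply/andP; split.
      apply: (le_trans zm); apply: leU2 => //; exact: leUl.
    apply: (le_trans ym'); apply: leU2 => //; exact: leUr.
  - move=> z [m [Mm zm]] Fz; apply: nex; exists m, z; split => //.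
  - right => z /IM Mz; exists z; split => //; exact: leUl.
exists M; split => //; last by move=> z Fz Mz; exact: MF Mz Fz.
split; first by split.
split => //.
  + by move=> x y xy Mx My; apply: Mx; exact: Md My.
  + move=> x y Mx My Mxy.
    have [m [f [Mm Ff fm]]] := key x Mx.
    have [m' [f' [Mm' Ff' fm']]] := key y My.
    apply: (MF (f `&` f')%O); last exact: FI Ff Ff'.
    apply: (Md _ (((m `|` m') `|` (x `&` y))%O)); last by apply: (MU) => //; apply: (MU).
    rewrite joinIr; apply: leI2.
      apply: (le_trans fm); apply: leU2 => //; exact: leUl.
    apply: (le_trans fm'); apply: leU2 => //; exact: leUr.
Qed.

Lemma separate (x y : T) : ~ (x <= y) ->
  exists p : set T, [/\ prime_ideal p, p y & ~ p x].
Proof.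
move=> nxy.
have [|||p [pp Ip Fp]] := @PIT [set z | z <= y] [set z | x <= z].
- split => /=; [exact: le0x | move=> a b ab bb; exact: le_trans ab bb|].
  by move=> a b ay b_y; rewrite leUx ay.
- split => /=; [exact: lex1 | move=> a b ab xa; exact: le_trans xa ab|].
  by move=> a b xa xb; rewrite lexI xa.
- move=> z zy xz; apply: nxy; exact: le_trans xz zy.
by exists p; split => //; [apply: Ip => /= | apply: Fp => /=].
Qed.

Section Prime.
Variables (p : set T) (pp : prime_ideal p).
Lemma prime_down x y : x <= y -> p y -> p x.
Proof. by case: pp => -[_ H _] _; apply: H. Qed.
Lemma prime_bot : p \bot.
Proof. by case: pp => -[]. Qed.
Lemma prime_top : ~ p \top.
Proof. by case: pp => _ []. Qed.
Lemma prime_join x y : p x -> p y -> p (x `|` y)%O.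
Proof. by case: pp => -[_ _ H] _; apply: H. Qed.
Lemma prime_meetN x y : ~ p x -> ~ p y -> ~ p (x `&` y)%O.
Proof. by case: pp => _ [_ _ H]; apply: H. Qed.
Lemma prime_meet x y : p (x `&` y)%O -> p x \/ p y.
Proof.
move=> pxy; apply: contrapT => H; apply: (@prime_meetN x y) => //.
  by move=> px; apply: H; left.
by move=> py; apply: H; right.
Qed.
End Prime.

End PIT.

Theorem theorem8 (d d' : Order.disp_t) (T : tbDistrLatticeType d)
  (T' : tbDistrLatticeType d') (f : {lmorphism T -> T'})
  (f0 : f \bot = \bot) (f1 : f \top = \top) :
  let prop_b (ft : T' -> T) :=
    forall (a c : T) (b : T'), (Order.meet (f a) b <= f c) <-> (Order.meet a (ft b) <= c) in
  [<-> open_map (Spec_map f0 f1);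
       exists ft : T' -> T,
         [/\ (forall (c : T) (b : T'), b <= f c <-> ft b <= c),
             prop_b ft,
             (forall (a : T) (b : T'), ft (Order.meet (f a) b) = Order.meet a (ft b)) &
             (forall a : T, ft (f a) = Order.meet (ft \top) a)];
       exists ft : T' -> T, prop_b ft;
       exists ft : T' -> T,
         (forall b : T', is_glb [set c : T | b <= f c] (ft b)) /\ prop_b ft].
Proof.
move=> prop_b.
have Ha ft : prop_b ft -> forall c b, b <= f c <-> ft b <= c.
  by move=> H c b; have := H \top c b; rewrite f1 !meet1x.
have P32 : (exists ft, prop_b ft) -> exists ft : T' -> T,
         [/\ (forall (c : T) (b : T'), b <= f c <-> ft b <= c),
             prop_b ft,
             (forall (a : T) (b : T'), ft (Order.meet (f a) b) = Order.meet a (ft b)) &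
             (forall a : T, ft (f a) = Order.meet (ft \top) a)].
  move=> [ft H]; have Ha' := Ha ft H.
  have Hc a b : ft (f a `&` b)%O = (a `&` ft b)%O.
    apply: le_anti; apply/andP; split.
      by apply/Ha'; apply/H.
    by apply/H; apply/Ha'.
  exists ft; split => //.
  by move=> a; have := Hc a \top; rewrite meetx1 => ->; rewrite meetC.
have P13 : open_map (Spec_map f0 f1) -> exists ft, prop_b ft.
  move=> Hop.
  have ex b : exists a : T, forall p : Spec T,
      D_open a p <-> (Spec_map f0 f1 @` D_open b) p.
    have Vo := Hop (D_open b) (fun q Hq => ex_intro _ b (conj Hq (fun _ h => h))).
    set V := Spec_map f0 f1 @` D_open b in Vo *.
    pose J := [set a : T | D_open a `<=` V].
    pose K := [set y : T' | exists a, J a /\ y <= f a].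
    have : K b.
      apply: contrapT => nKb.
      have [||| q [qp Kq Fq]] := @PIT _ T' K [set y | b <= y].
      + split.
        * exists \bot; split; last by rewrite f0.
          by move=> p Dp; exfalso; apply: Dp; apply: prime_bot (proj2_sig p).
        * move=> x y xy [a [Ja ya]]; exists a; split => //; exact: le_trans xy ya.
        * move=> x y [a [Ja xa]] [a' [Ja' ya']]; exists (a `|` a')%O; split.
            move=> p Dp; have [pa|npa] := pselect (sval p a).
              apply: Ja' => pa'; apply: Dp; exact (prime_join (proj2_sig p) pa pa').
            exact: Ja npa.
          by rewrite omorphU; apply: leU2.
      + split => /=; [exact: lex1 | move=> x y xy bx; exact: le_trans bx xy|].
        by move=> x y bx b_y; rewrite lexI bx.
      + move=> z Kz bz; apply: nKb; case: Kz => a [Ja za]; exists a; split => //.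
        exact: le_trans bz za.
      + have Vq : V (Spec_map f0 f1 (exist _ q qp)).
          by exists (exist _ q qp) => //; apply: Fq => /=.
        have [a [Da DaV]] := Vo _ Vq.
        by apply: Da => /=; apply: Kq; exists a; split.
    move=> [a0 [Ja0 ba0]]; exists a0 => p; split; first exact: Ja0.
    move=> [q Dq <-] /= qa0; apply: Dq; exact (prime_down (proj2_sig q) ba0 qa0).
  have [ft Hft] := choice ex.
  exists ft => a c b; split.
  - move=> H; apply: contrapT => /separate [p [pp pc npac]].
    have npa : ~ p a by move=> pa; apply: npac; exact (prime_down pp (leIl _ _) pa).
    have npft : ~ p (ft b).
      by move=> pa; apply: npac; exact (prime_down pp (leIr _ _) pa).
    have : D_open (ft b) (exist _ p pp) by [].
    move=> /(Hft b) [q Dq /(congr1 sval) /= qp].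
    rewrite -qp in pc npa.
    have := prime_down (proj2_sig q) H pc.
    by move=> /(prime_meet (proj2_sig q)) [].
  - move=> H; apply: contrapT => /separate [q [qp qfc nqab]].
    have nqa : ~ q (f a).
      by move=> pa; apply: nqab; exact (prime_down qp (leIl _ _) pa).
    have nqb : ~ q b.
      by move=> pa; apply: nqab; exact (prime_down qp (leIr _ _) pa).
    have : (Spec_map f0 f1 @` D_open b) (Spec_map f0 f1 (exist _ q qp)).
      by exists (exist _ q qp).
    move=> /(Hft b) /= nqft.
    have fH : f (a `&` ft b)%O <= f c by apply: omorph_le.
    have := prime_down qp fH qfc.
    by rewrite omorphI => /(prime_meet qp) [].
tfae.
- by move=> /P13 /P32.
- by move=> [ft [_ H _ _]]; exists ft.
- move=> [ft H]; exists ft; split => // b; split.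
    by move=> c /= bc; apply/(Ha ft H).
  by move=> m' Hm; apply: Hm => /=; apply/(Ha ft H).
- move=> [ft [_ H]] U Uo _ [q Uq <-].
  have [b [Dbq DbU]] := Uo q Uq.
  have bf : b <= f (ft b) by apply/(Ha ft H).
  exists (ft b); split.
    by move=> /= qf; apply: Dbq; exact (prime_down (proj2_sig q) bf qf).
  case=> p pp Dp.
  pose I := [set y | exists c, p c /\ y <= f c].
  pose F := [set y | exists a, ~ p a /\ (f a `&` b)%O <= y].
  have [||| q' [q'p Iq' Fq']] := @PIT _ T' I F.
  + split.
    * exists \bot; split; [exact: prime_bot | by rewrite f0].
    * move=> x y xy [c [pc yc]]; exists c; split=>//; exact: le_trans xy yc.
    * move=> x y [c [pc xc]] [c' [pc' yc']]; exists (c `|` c')%O; split.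
        exact: prime_join.
      by rewrite omorphU; exact: leU2.
  + split.
    * exists \top; split; [exact: prime_top | exact: lex1].
    * move=> x y xy [a [pa ax]]; exists a; split => //; exact: le_trans ax xy.
    * move=> x y [a [pa ax]] [a' [pa' ay]]; exists (a `&` a')%O; split.
        exact: prime_meetN.
      rewrite lexI; apply/andP; split.
        apply: le_trans ax; rewrite omorphI; apply: leI2 => //; exact: leIl.
      apply: le_trans ay; rewrite omorphI; apply: leI2 => //; exact: leIr.
  + move=> z [c [pc zc]] [a [npa az]].
    have : (f a `&` b)%O <= f c by exact: le_trans az zc.
    move=> /(H a c b) h; apply: (prime_meetN pp npa Dp).
    exact (prime_down pp h pc).
  + exists (exist _ q' q'p).
      apply: DbU => /= q'b; apply: (Fq' b) => //; exists \top; split.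
        exact: prime_top.
      by rewrite f1 meet1x.
    apply: eq_exist => /=; apply/seteqP; split => x /=.
      move=> q'fx; apply: contrapT => npx; apply: (Fq' (f x)) => //.
      by exists x; split => //; exact: leIl.
    move=> px; have : I (f x) by exists x; split.
    by move=> /Iq'.
Qed.
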